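(* Let $(X,d)$, $(\Lambda,d_\Lambda)$ be compact metric spaces, $\tau:\Lambda\times X\to X$ continuous and $q:X\to\mathcal P(\Lambda)$ continuous. Assume: (W1) each $\tau_\lambda$ is $1$-Lipschitz on $X$; (MP1) there are $s>0$ and an integer $M\ge1$ such that $\int_{\Lambda^M}|f(\tau_{\lambda^M}(x))-f(\tau_{\lambda^M}(y))|\,dP^q_{M,x}(\lambda^M)\le s\,d(x,y)$ for all $x,y\in X$ and all $f\in\mathrm{Lip}_1(X)$; (H2) there is $r\ge0$ with $d(\tau(\lambda_1,x),\tau(\lambda_2,x))\le r\,d_\Lambda(\lambda_1,\lambda_2)$ for all $\lambda_1,\lambda_2$, $x$; (H3) there is $t\ge0$ with $d_{MK}(q_x,q_y)\le t\,d(x,y)$ for all $x,y\in X$. Then there exists $c>0$ such that for every $f\in\mathrm{Lip}_1(X)$, the function $B_q^M(f)$ is $c$-Lipschitz on $X$.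
   Context: $\mathcal{P}(Y)$ is the set of Borel probability measures on a compact metric space $Y$, with $d_{MK}(\mu,\nu)=\sup_{f\in \mathrm{Lip}_1(Y)}\{\int f\,d\mu-\int f\,d\nu\}$, $\mathrm{Lip}_1(Y)$ the real $1$-Lipschitz functions on $Y$. $\tau_\lambda(x)=\tau(\lambda,x)$; for $\lambda^j=(\lambda_0,\dots,\lambda_{j-1})$, $\tau_{\lambda^j}=\tau_{\lambda_{j-1}}\circ\cdots\circ\tau_{\lambda_0}$. $P^q_{M,x}\in\mathcal P(\Lambda^M)$ is given by $dP^q_{M,x}(\lambda_0,\dots,\lambda_{M-1})=dq_{\tau_{\lambda^{M-1}}(x)}(\lambda_{M-1})\cdots dq_{\tau_{\lambda^1}(x)}(\lambda_1)\,dq_x(\lambda_0)$. The transfer operator is $B_q(f)(x)=\int_\Lambda f(\tau(\lambda,x))\,dq_x(\lambda)$, and $B_q^M$ is its $M$-th iterate, so $B_q^M(f)(x)=\int_{\Lambda^M}f(\tau_{\lambda^M}(x))\,dP^q_{M,x}(\lambda^M)$. *)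

(* Defs.v *)
From HB Require Import structures.
From mathcomp Require Import all_boot all_order all_algebra.
From mathcomp Require Import all_classical all_reals all_analysis.
Set Implicit Arguments. Unset Strict Implicit. Unset Printing Implicit Defensive.
Import Order.TTheory GRing.Theory Num.Theory.
Local Open Scope classical_set_scope.
Local Open Scope ring_scope.

Section Defs.
Context {R : realType}.

Definition is_metric (T : Type) (d : T -> T -> R) : Prop :=
  (forall x y, 0 <= d x y) /\ (forall x y, d x y = 0 <-> x = y) /\
  (forall x y, d x y = d y x) /\ (forall x y z, d x z <= d x y + d y z).

(* sequential compactness (equivalent to compactness for metric spaces) *)
Definition metric_compact (T : Type) (d : T -> T -> R) : Prop :=
  forall u : nat -> T, exists (phi : nat -> nat) (l : T),
    (forall n m, (n < m)%N -> (phi n < phi m)%N) /\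
    (fun n => d (u (phi n)) l) @ \oo --> 0.

Definition metric_open (T : Type) (d : T -> T -> R) (A : set T) : Prop :=
  forall x, A x -> exists2 e, 0 < e & forall y, d x y < e -> A y.

Definition metric_continuous (S T : Type) (dS : S -> S -> R) (dT : T -> T -> R)
  (f : S -> T) : Prop :=
  forall x e, 0 < e -> exists2 del, 0 < del & forall y, dS x y < del -> dT (f x) (f y) < e.

Definition jointly_continuous (L X : Type) (dL : L -> L -> R) (d : X -> X -> R)
  (tau : L -> X -> X) : Prop :=
  forall l x e, 0 < e -> exists2 del, 0 < del & forall l' x',
    dL l l' < del -> d x x' < del -> d (tau l x) (tau l' x') < e.

Definition Lip1 (T : Type) (d : T -> T -> R) (f : T -> R) : Prop :=
  forall a b, `|f a - f b| <= d a b.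

Definition lipschitz_with (T : Type) (d : T -> T -> R) (c : R) (f : T -> R) : Prop :=
  forall a b, `|f a - f b| <= c * d a b.

Definition borel_for (dm : measure_display) (L : measurableType dm) (dL : L -> L -> R) : Prop :=
  @measurable _ L = <<s [set A | metric_open dL A] >>.

(* continuity of q : X -> P(Lambda) for the weak topology *)
Definition weakly_continuous (dm : measure_display) (L : measurableType dm)
  (dL : L -> L -> R) (X : Type) (d : X -> X -> R) (q : X -> probability L R) : Prop :=
  forall g : L -> R, metric_continuous dL (fun a b : R => `|a - b|) g ->
    (exists C, forall l, `|g l| <= C) ->
    metric_continuous d (fun a b : R => `|a - b|)
      (fun x => fine (\int[q x]_l (g l)%:E)%E).

Definition Bq (dm : measure_display) (L : measurableType dm) (X : Type)
  (tau : L -> X -> X) (q : X -> probability L R) (f : X -> R) : X -> R :=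
  fun x => fine (\int[q x]_l (f (tau l x))%:E)%E.

(* One step of the integral against P^q_{M,x} of a function of the pair of
   trajectories (tau_{lambda^M}(x), tau_{lambda^M}(y)):
   Cq F x y = int F(tau(lambda,x), tau(lambda,y)) dq_x(lambda).
   Iterating M times gives, by the definition of P^q_{M,x} as the product of
   the conditional measures dq_{tau_{lambda^j}(x)}(lambda_j),
   iter M Cq F x y = int_{Lambda^M} F(tau_{lambda^M} x, tau_{lambda^M} y) dP^q_{M,x}. *)
Definition Cq (dm : measure_display) (L : measurableType dm) (X : Type)
  (tau : L -> X -> X) (q : X -> probability L R) (F : X -> X -> \bar R) : X -> X -> \bar R :=
  fun x y => (\int[q x]_l F (tau l x) (tau l y))%E.

End Defs.

(* Main.v *)
Require Import Defs.
From HB Require Import structures.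
From mathcomp Require Import all_boot all_order all_algebra.
From mathcomp Require Import all_classical all_reals all_analysis.
From mathcomp Require Import measurable_realfun.
From mathcomp Require Import ring lra.
Import Order.TTheory GRing.Theory Num.Theory.
Local Open Scope classical_set_scope.
Local Open Scope ring_scope.

Lemma incr_ge (phi : nat -> nat) : (forall n m, (n < m)%N -> (phi n < phi m)%N) ->
  forall n, (n <= phi n)%N.
Proof.
move=> h; elim=> [//|n IH]; exact: leq_ltn_trans IH (h _ _ (ltnSn n)).
Qed.

Lemma metric_bounded (R : realType) (T : Type) (d : T -> T -> R) :
  is_metric d -> metric_compact d -> exists B, 0 <= B /\ forall a b, d a b <= B.
Proof.
move=> [d0 [_ [dsym dtri]]] hc.
case: (pselect (exists x0 : T, True)) => [[x0 _]|nT]; last first.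
  by exists 0; split => // a; exfalso; apply: nT; exists a.
suff [C hC] : exists C, forall a, d x0 a <= C.
  exists (C + C); split.
    by apply: le_trans (d0 x0 x0) _; rewrite -[d x0 x0]addr0; apply: lerD => //; apply: le_trans (hC x0).
  move=> a b; apply: le_trans (dtri a x0 b) _; rewrite dsym; exact: lerD.
apply/not_existsP => hn.
have /choice [u hu] : forall n : nat, exists a, n%:R < d x0 a.
  move=> n; have := hn n%:R; move/existsNP => [a /negP]; rewrite -ltNge => ha.
  by exists a.
have [phi [l [hphi hcv]]] := hc u.
move/cvgrPdist_lt: hcv => /(_ 1 ltr01) [N _ hN].
pose n := maxn N (Num.truncn (d x0 l + 1)).+1.
have hn1 : (N <= n)%N by rewrite leq_maxl.
have := hN n hn1; rewrite /= sub0r normrN ger0_norm ?d0 // => h1.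
have h2 := hu (phi n).
have h3 : (n%:R : R) <= (phi n)%:R by rewrite ler_nat incr_ge.
have h4 : d x0 (u (phi n)) <= d x0 l + d (u (phi n)) l by rewrite (dsym (u (phi n))) ; exact: dtri.
have h5 : d x0 l + 1 < n%:R.
  apply: lt_le_trans (truncnS_gt _) _; rewrite ler_nat leq_maxr //.
have : (n%:R : R) < n%:R by lra.
by rewrite ltxx.
Qed.
Lemma lip_measurable (R : realType) (dm : measure_display) (L : measurableType dm)
  (dL : L -> L -> R) (hL : is_metric dL) (hLB : borel_for dL) (h : L -> R) (C : R) :
  0 <= C -> (forall a b, `|h a - h b| <= C * dL a b) -> measurable_fun setT h.
Proof.
move=> C0 hh; apply: (measurability _ (RGenOInfty.measurableE R)) => //.
move=> /= _ [_ [x ->] <-]; rewrite setTI.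
rewrite /borel_for in hLB; rewrite hLB; apply: sub_sigma_algebra => l /=.
rewrite in_itv /= andbT => xl.
exists ((h l - x) / (C + 1)).
  by apply: divr_gt0; lra.
move=> y dy; rewrite /= in_itv /= andbT.
have e1 : h l - h y <= C * dL l y by apply: le_trans (ler_norm _) (hh _ _).
have e2 : C * dL l y <= C * ((h l - x) / (C + 1)) by apply: ler_wpM2l => //; exact: ltW.
have e3 : C * ((h l - x) / (C + 1)) < h l - x.
  rewrite mulrA ltr_pdivrMr; last lra.
  nra.
lra.
Qed.
Lemma lip_integrable (R : realType) (dm : measure_display) (L : measurableType dm)
  (dL : L -> L -> R) (hL : is_metric dL) (hLc : metric_compact dL) (hLB : borel_for dL)
  (P : probability L R) (h : L -> R) (C : R) :
  0 <= C -> (forall a b, `|h a - h b| <= C * dL a b) -> P.-integrable setT (EFin \o h).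
Proof.
move=> C0 hh; apply: measurable_bounded_integrable => //.
- Set Printing All. idtac. Unset Printing All. by apply: le_lt_trans (probability_le1 P _) (ltry _).
- exact: (@lip_measurable R dm L dL hL hLB h C C0 hh).
have [B [B0 hB]] := @metric_bounded R L dL hL hLc.
case: (pselect (exists l0 : L, True)) => [[l0 _]|nL]; last first.
  by exists 0; split => // M _ x; exfalso; apply: nL; exists x.
exists (`|h l0| + C * B); split; first by rewrite num_real.
move=> M hM x _ /=.
apply: le_trans (ltW hM).
have : `|h x| <= `|h l0| + `|h x - h l0| by rewrite -[X in `|X|](subrK (h l0)) addrC ler_normD.
move=> e; apply: le_trans e _; apply: lerD => //.
apply: le_trans (hh _ _) _; exact: ler_wpM2l.
Qed.
Lemma EFin_Rint (R : realType) (dm : measure_display) (L : measurableType dm)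
  (P : probability L R) (h : L -> R) : P.-integrable setT (EFin \o h) ->
  (\int[P]_l (h l)%:E)%E = (Rintegral P setT h)%:E.
Proof. by move=> ih; rewrite /Rintegral fineK //; exact: integrable_fin_num. Qed.

Lemma Bq_step (R : realType) (X : Type) (d : X -> X -> R)
  (dm : measure_display) (L : measurableType dm) (dL : L -> L -> R)
  (tau : L -> X -> X) (q : X -> probability L R)
  (hX : is_metric d)
  (hL : is_metric dL) (hLc : metric_compact dL) (hLB : borel_for dL)
  (W1 : forall l x y, d (tau l x) (tau l y) <= d x y)
  (r : R) (hr : 0 <= r)
  (H2 : forall l1 l2 x, d (tau l1 x) (tau l2 x) <= r * dL l1 l2)
  (t : R) (ht : 0 <= t)
  (H3 : forall x y (g : L -> R), Lip1 dL g ->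
     (\int[q x]_l (g l)%:E - \int[q y]_l (g l)%:E <= (t * d x y)%:E)%E)
  (g : X -> R) (K : R) : 0 < K -> lipschitz_with d K g ->
  lipschitz_with d (K * (1 + (r + 1) * t)) (Bq tau q g).
Proof.
move=> K0 Lg x y.
have [d0 [_ [dsym _]]] := hX.
have [dL0 _] := hL.
have Lh z : forall a b, `|g (tau a z) - g (tau b z)| <= (K * r) * dL a b.
  move=> a b; apply: le_trans (Lg _ _) _; rewrite -mulrA; apply: ler_wpM2l; first exact: ltW.
  exact: H2.
have KR0 : 0 <= K * r by apply: mulr_ge0 => //; exact: ltW.
have int z w : (q w).-integrable setT (EFin \o (fun l => g (tau l z))).
  exact: (@lip_integrable R dm L dL hL hLc hLB (q w) _ (K * r) KR0 (Lh z)).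
change (`|Rintegral (q x) setT (fun l => g (tau l x)) -
          Rintegral (q y) setT (fun l => g (tau l y))| <= K * (1 + (r + 1) * t) * d x y).
set I1 := Rintegral (q x) setT (fun l => g (tau l x)).
set I2 := Rintegral (q x) setT (fun l => g (tau l y)).
set I3 := Rintegral (q y) setT (fun l => g (tau l y)).
have e1 : `|I1 - I2| <= K * d x y.
  have intB : (q x).-integrable setT (EFin \o (fun l => g (tau l x) - g (tau l y))).
    have -> : EFin \o (fun l => g (tau l x) - g (tau l y)) =
      (fun l => (EFin \o (fun l => g (tau l x))) l - (EFin \o (fun l => g (tau l y))) l)%E.
      by apply: funext => l; rewrite /= EFinB.
    apply: (integrableB measurableT (int x x) (int y x)).
  rewrite /I1 /I2 -(RintegralB measurableT (int x x) (int y x)).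
  apply: le_trans (le_normr_Rintegral measurableT intB) _.
  apply: le_trans (@le_Rintegral _ _ _ (q x) setT _ (fun=> K * d x y) _ _ _ _) _ => //.
  - exact: integrable_norm.
  - exact: finite_measure_integrable_cst.
  - by move=> l _; apply: le_trans (Lg _ _) _; apply: ler_wpM2l; [exact: ltW| exact: W1].
  rewrite Rintegral_cst // (_ : fine _ = 1) ?mulr1 //; exact: (congr1 fine (probability_setT (q x))).
pose D := K * (r + 1).
have D0 : 0 < D by apply: mulr_gt0 => //; lra.
have LD : Lip1 dL (fun l => g (tau l y) * D^-1).
  move=> a b; rewrite -mulrBl normrM [`|D^-1|]gtr0_norm ?invr_gt0 //.
  rewrite ler_pdivrMr //; apply: le_trans (Lh y a b) _.
  rewrite [_ * dL a b]mulrC /D; apply: ler_wpM2l; first exact: dL0.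
  rewrite mulrDr mulr1; lra.
have intD w : (q w).-integrable setT (EFin \o (fun l => g (tau l y) * D^-1)).
  apply: (@lip_integrable R dm L dL hL hLc hLB (q w) _ 1 ler01).
  by move=> a b; rewrite mul1r; exact: LD.
have h1 := H3 x y _ LD.
have h2 := H3 y x _ LD.
rewrite (@EFin_Rint _ _ _ _ _ (intD x)) (@EFin_Rint _ _ _ _ _ (intD y)) in h1 h2.
rewrite -EFinB lee_fin (RintegralZr _ measurableT (int y x)) (RintegralZr _ measurableT (int y y)) in h1.
rewrite -EFinB lee_fin (RintegralZr _ measurableT (int y x)) (RintegralZr _ measurableT (int y y)) in h2.
rewrite -/I2 -/I3 in h1 h2.
rewrite dsym in h2.
have e2 : `|I2 - I3| <= D * t * d x y.
  have hd := d0 x y.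
  have hi : 0 < D^-1 by rewrite invr_gt0.
  have hh1 : I2 - I3 <= D * (t * d x y).
    rewrite -ler_pdivrMl // mulrC mulrBl; exact: h1.
  have hh2 : I3 - I2 <= D * (t * d x y).
    rewrite -ler_pdivrMl // mulrC mulrBl; exact: h2.
  rewrite -mulrA ler_norml; apply/andP; split; lra.
have e3 : `|I1 - I3| <= `|I1 - I2| + `|I2 - I3|.
  by rewrite -[I1 - I3](subrKA I2) ler_normD.
rewrite /D in e2.
apply: le_trans e3 _; apply: le_trans (lerD e1 e2) _; rewrite le_eqVlt; apply/orP; left; apply/eqP; ring.
Qed.
Theorem mainTheorem10 (R : realType) (X : Type) (d : X -> X -> R)
  (dm : measure_display) (L : measurableType dm) (dL : L -> L -> R)
  (tau : L -> X -> X) (q : X -> probability L R)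
  (hX : is_metric d) (hXc : metric_compact d)
  (hL : is_metric dL) (hLc : metric_compact dL) (hLB : borel_for dL)
  (htau : jointly_continuous dL d tau)
  (hq : weakly_continuous dL d q)
  (W1 : forall l x y, d (tau l x) (tau l y) <= d x y)
  (s : R) (M : nat) (hs : 0 < s) (hM : (1 <= M)%N)
  (MP1 : forall f : X -> R, Lip1 d f -> forall x y,
     (iter M (Cq tau q) (fun u v => (`|f u - f v|)%:E) x y <= (s * d x y)%:E)%E)
  (r : R) (hr : 0 <= r)
  (H2 : forall l1 l2 x, d (tau l1 x) (tau l2 x) <= r * dL l1 l2)
  (t : R) (ht : 0 <= t)
  (H3 : forall x y (g : L -> R), Lip1 dL g ->
     (\int[q x]_l (g l)%:E - \int[q y]_l (g l)%:E <= (t * d x y)%:E)%E) :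
  exists2 c : R, 0 < c &
    forall f : X -> R, Lip1 d f -> lipschitz_with d c (iter M (Bq tau q) f).
Proof.
have c0 : 0 < 1 + (r + 1) * t.
  have : 0 <= (r + 1) * t by apply: mulr_ge0 => //; lra.
  lra.
exists ((1 + (r + 1) * t) ^+ M); first exact: exprn_gt0.
move=> f Lf.
elim: M {hM MP1} => [|n IH].
  by move=> a b; rewrite expr0 mul1r; exact: Lf.
rewrite iterS exprSr.
apply: (@Bq_step R X d dm L dL tau q hX hL hLc hLB W1 r hr H2 t ht H3).
  exact: exprn_gt0.
exact: IH.
Qed.
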